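(* For every $\epsilon>0$ there exist an online convex optimization problem (convex losses $f_1,f_2,\dots$ with uniformly bounded gradients on a convex feasible set $\mathcal{F}$ of bounded $\ell_\infty$-diameter) and parameters $\beta_1,\beta_2\in[0,1)$ with $\beta_1^2/\sqrt{\beta_2}<1$ and step sizes $\alpha_t=\alpha/\sqrt{t}$ such that Adam with the $\epsilon$-modified update has non-vanishing average regret, i.e. $R_T/T\not\to0$ as $T\to\infty$.
   Context: Regret: $R_T=\sum_{t=1}^T f_t(x_t)-\min_{x\in\mathcal{F}}\sum_{t=1}^T f_t(x)$. $\Pi_{\mathcal{F},A}(y)=\arg\min_{x\in\mathcal{F}}\|A^{1/2}(x-y)\|$. Adam with the $\epsilon$-modified update: $x_1\in\mathcal{F}$, $m_0=v_0=0$; for each $t$: $g_t=\nabla f_t(x_t)$, $m_t=\beta_1 m_{t-1}+(1-\beta_1)g_t$, $v_t=\beta_2 v_{t-1}+(1-\beta_2)g_t^2$, $V_t=\mathrm{diag}(v_t)$, $\hat x_{t+1}=x_t-\alpha_t m_t/\sqrt{V_t+\epsilon I}$, $x_{t+1}=\Pi_{\mathcal{F},\sqrt{V_t}}(\hat x_{t+1})$ (coordinatewise operations). The parameter conditions $\beta_1,\beta_2\in[0,1)$, $\beta_1^2/\sqrt{\beta_2}<1$, $\alpha_t=\alpha/\sqrt t$ are those of Kingma and Ba's convergence analysis of Adam. *)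

(* Defs.v *)
From mathcomp Require Import all_boot all_order all_algebra.
From mathcomp Require Import all_classical all_reals all_analysis.
Set Implicit Arguments. Unset Strict Implicit. Unset Printing Implicit Defensive.
Import Order.TTheory GRing.Theory Num.Theory numFieldNormedType.Exports.
Local Open Scope classical_set_scope.
Local Open Scope ring_scope.

Section Defs.
Variables (R : realType) (d : nat).
Implicit Types (F : set 'rV[R]_d) (f : 'rV[R]_d -> R) (x y w : 'rV[R]_d).

Definition grad f x : 'rV[R]_d := \row_(i < d) derive f x (delta_mx 0 i).

Definition convex_set_on F : Prop :=
  forall x y (l : R), F x -> F y -> 0 <= l <= 1 -> F (l *: x + (1 - l) *: y).

Definition convex_fun_on F f : Prop :=
  forall x y (l : R), F x -> F y -> 0 <= l <= 1 ->
    f (l *: x + (1 - l) *: y) <= l * f x + (1 - l) * f y.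

(* || A^{1/2} z ||_2 for A = diag(w), w >= 0 *)
Definition wnorm w (z : 'rV[R]_d) : R :=
  Num.sqrt (\sum_(i < d) w 0 i * (z 0 i) ^+ 2).

(* p is a value of Pi_{F,diag w}(y) = argmin_{q in F} ||diag(w)^{1/2} (q - y)|| *)
Definition is_proj F w y (p : 'rV[R]_d) : Prop :=
  F p /\ forall q, F q -> wnorm w (p - y) <= wnorm w (q - y).

(* (x, m, v) is a run of Adam with the eps-modified update started at x1;
   losses f_1, f_2, ... are f 1, f 2, ... ; V_t = diag (v t). *)
Definition adam_run (eps b1 b2 alpha : R) (f : nat -> 'rV[R]_d -> R) F
    (x1 : 'rV[R]_d) (x m v : nat -> 'rV[R]_d) : Prop :=
  [/\ x 1%N = x1, m 0%N = 0, v 0%N = 0 &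
   forall t : nat, (1 <= t)%N ->
     let g := grad (f t) (x t) in
     [/\ m t = b1 *: m t.-1 + (1 - b1) *: g,
         v t = b2 *: v t.-1 + (1 - b2) *: map_mx (fun a => a ^+ 2) g &
         is_proj F (map_mx Num.sqrt (v t))
           (x t - \row_(i < d) ((alpha / Num.sqrt t%:R) * m t 0 i
                                  / Num.sqrt (v t 0 i + eps)))
           (x t.+1)]].

Definition regret (f : nat -> 'rV[R]_d -> R) F (x : nat -> 'rV[R]_d) (T : nat) : R :=
  \sum_(1 <= t < T.+1) f t (x t)
  - inf [set \sum_(1 <= t < T.+1) f t y | y in F].

End Defs.

(* Main.v *)
Require Import Defs.
From mathcomp Require Import all_boot all_order all_algebra.
From mathcomp Require Import all_classical all_reals all_analysis.
From mathcomp Require Import ring lra.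
Set Implicit Arguments. Unset Strict Implicit. Unset Printing Implicit Defensive.
Import Order.TTheory GRing.Theory Num.Theory numFieldNormedType.Exports.
Local Open Scope classical_set_scope.
Local Open Scope ring_scope.
Lemma derive_lin (R : realType) n (f : 'rV[R]_n -> R) x v :
  (forall (a b : R) y z, f (a *: y + b *: z) = a * f y + b * f z) ->
  derive f x v = f v.
Proof.
move=> hf; rewrite /derive; apply: cvg_lim => //.
apply: cvg_near_cst; near=> h.
rewrite /= -[x in f (_ + x)]scale1r hf mul1r addrK.
have hh : h != 0 by near: h; exact: nbhs_dnbhs_neq.
by rewrite /GRing.scale /= mulrA mulVf // mul1r.
Unshelve. all: by end_near.
Qed.

Definition kk (R : realType) (t : nat) : R := if t == 1%N then 2 else 1.
Definition ff (R : realType) (s : R) (t : nat) (x : 'rV[R]_2) : R :=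
  kk R t * (- (3/4 * s) * x 0 0 + - (4/3 * s) * x 0 1).

Lemma ff_lin (R : realType) s t (a b : R) y z :
  ff s t (a *: y + b *: z) = a * ff s t y + b * ff s t z.
Proof. rewrite /ff !mxE; ring. Qed.

Lemma grad_ff (R : realType) (s : R) t x :
  grad (ff s t) x = \row_(i < 2) (kk R t * (if i == 0 then - (3/4 * s) else - (4/3 * s))).
Proof.
apply/rowP => i; rewrite !mxE derive_lin; last exact: ff_lin.
rewrite /ff !mxE; case: i => [[|[|//]] hi] /=; rewrite ?eqxx /=; ring.
Qed.
Definition Fs (R : realType) : set 'rV[R]_2 :=
  [set x | 27 * x 0 0 + 64 * x 0 1 <= 0 /\ `|x 0 0| <= 1 /\ `|x 0 1| <= 1].

Lemma sum2 (R : realType) (F : 'I_2 -> R) : \sum_(i < 2) F i = F 0 + F 1.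
Proof. rewrite !big_ord_recl big_ord0 addr0; congr (F _ + F _); exact: val_inj. Qed.

Lemma proj0 (R : realType) (s b : R) (hs : 0 < s) (hb : 0 <= b) p :
  is_proj (@Fs R) (\row_(i < 2) (if i == 0 then 3/4*s else 4/3*s))
     (\row_(i < 2) (if i == 0 then b*(3/5) else b*(4/5))) p -> p = 0.
Proof.
case=> [[Fp _] /(_ 0)].
have F0 : @Fs R 0 by rewrite /Fs /= !mxE normr0; lra.
move=> /(_ F0); rewrite /wnorm ler_sqrt; last first.
  rewrite sum2 !mxE /=; apply: addr_ge0; apply: mulr_ge0; try lra; exact: sqr_ge0.
rewrite !sum2 !mxE /= => H.
have hsb : 0 <= s * b by apply: mulr_ge0 => //; lra.
have hc : s * b * (27 * p 0 0 + 64 * p 0 1) <= 0 by nra.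
have Q : s * p 0 0 ^+ 2 * (3/4) + s * p 0 1 ^+ 2 * (4/3) <= 0.
  move: H; rewrite !sub0r !sqrrN; nra.
have q0 : 0 <= s * p 0 0 ^+ 2 by apply: mulr_ge0; [lra| exact: sqr_ge0].
have q1 : 0 <= s * p 0 1 ^+ 2 by apply: mulr_ge0; [lra| exact: sqr_ge0].
have h0 : p 0 0 ^+ 2 <= 0 by rewrite -(pmulr_rle0 _ hs); lra.
have h1 : p 0 1 ^+ 2 <= 0 by rewrite -(pmulr_rle0 _ hs); lra.
apply/rowP => i; rewrite mxE.
have e0 : p 0 0 = 0 by apply/eqP; rewrite -sqrf_eq0 eq_le h0 sqr_ge0.
have e1 : p 0 1 = 0 by apply/eqP; rewrite -sqrf_eq0 eq_le h1 sqr_ge0.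
by case: i => [[|[|//]] hi]; [rewrite -e0 | rewrite -e1]; congr (p _ _); apply: val_inj.
Qed.

Lemma ord2 (i : 'I_2) : i = 0 \/ i = 1.
Proof. by case: i => [[|[|//]] hi]; [left|right]; apply: val_inj. Qed.

Lemma Fs_closed (R : realType) : closed (@Fs R).
Proof.
have -> : @Fs R = ((fun x : 'rV[R]_2 => 27 * x 0 0 + 64 * x 0 1) @^-1` [set r | r <= 0])
   `&` (((fun x : 'rV[R]_2 => `|x 0 0|) @^-1` [set r | r <= 1])
   `&` ((fun x : 'rV[R]_2 => `|x 0 1|) @^-1` [set r | r <= 1])).
  by apply/seteqP; split => x /=.
apply: closedI; last apply: closedI.
- apply: preimage_closed; last exact: closed_le.
  move=> x _.
  have h1 := continuousM (@cst_continuous _ _ (27:R) x) (@coord_continuous R 1 2 0 0 x).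
  have h2 := continuousM (@cst_continuous _ _ (64:R) x) (@coord_continuous R 1 2 0 1 x).
  exact: (continuousD h1 h2).
- apply: preimage_closed; last exact: closed_le.
  move=> x _; apply: continuous_comp; [exact: coord_continuous | exact: norm_continuous].
- apply: preimage_closed; last exact: closed_le.
  move=> x _; apply: continuous_comp; [exact: coord_continuous | exact: norm_continuous].
Qed.

Lemma Fs_convex (R : realType) : convex_set_on (@Fs R).
Proof.
move=> x y l [x1 [x2 x3]] [y1 [y2 y3]] /andP[l0 l1].
rewrite /Fs /= !mxE.
have nb : forall a b : R, `|a| <= 1 -> `|b| <= 1 -> `|l * a + (1 - l) * b| <= 1.
  move=> a b ha hb; apply: (le_trans (ler_normD _ _)).
  rewrite !normrM (ger0_norm l0) (ger0_norm (_ : 0 <= 1 - l)); last lra.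
  have : l * `|a| <= l by rewrite -[leRHS]mulr1 ler_wpM2l.
  have : (1 - l) * `|b| <= 1 - l by rewrite -[leRHS]mulr1 ler_wpM2l //; lra.
  lra.
split; last by split; apply: nb.
nra.
Qed.

Lemma ff_diff (R : realType) (s : R) t x : differentiable (ff s t) x.
Proof.
rewrite /ff; apply: differentiableM; first exact: differentiable_cst.
apply: differentiableD; apply: differentiableM;
  (exact: differentiable_cst || exact: differentiable_coord).
Qed.

Lemma ff0 (R : realType) (s : R) t : ff s t 0 = 0.
Proof. by rewrite /ff !mxE; ring. Qed.

Lemma kk_ge1 (R : realType) t : 1 <= kk R t <= 2.
Proof. by rewrite /kk; case: (t == 1)%N; apply/andP; split; lra. Qed.

Theorem theorem6 (R : realType) (eps : R) (heps : 0 < eps) :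
  exists (d : nat) (F : set 'rV[R]_d) (f : nat -> 'rV[R]_d -> R)
         (b1 b2 alpha : R) (x1 : 'rV[R]_d),
    (* the online convex optimization problem *)
    (F !=set0 /\ convex_set_on F /\ closed F /\
        (exists D : R, forall x y, F x -> F y ->
            forall i : 'I_d, `|x 0 i - y 0 i| <= D) /\
        (forall t : nat, (1 <= t)%N -> convex_fun_on F (f t)) /\
        (forall t : nat, (1 <= t)%N -> forall x, F x -> differentiable (f t) x) /\
        (exists G : R, forall t : nat, (1 <= t)%N -> forall x, F x ->
            forall i : 'I_d, `|grad (f t) x 0 i| <= G)) /\
    (* the parameters *)
    [/\ 0 <= b1 < 1, 0 <= b2 < 1, b1 ^+ 2 < Num.sqrt b2, 0 < alpha & F x1] /\
    (* every run of Adam has non-vanishing average regret *)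
    (forall x m v : nat -> 'rV[R]_d,
       adam_run eps b1 b2 alpha f F x1 x m v ->
       ~ ((fun T : nat => regret f F x T / T%:R) @ \oo --> (0 : R))).
Proof.
pose s := Num.sqrt eps.
have hs : 0 < s by rewrite sqrtr_gt0.
have es : eps = s ^+ 2 by rewrite sqr_sqrtr // ltW.
have F0 : @Fs R 0 by rewrite /Fs /= !mxE normr0; lra.
exists 2%N, (@Fs R), (ff s), 0, (3/4), 1, 0.
split.
  split; first by exists 0.
  split; first exact: Fs_convex.
  split; first exact: Fs_closed.
  split.
    exists 2 => x y [_ [x0 x1]] [_ [y0 y1]] i.
    apply: (le_trans (ler_normB _ _)).
    by case: (ord2 i) => ->; lra.
  split.
    by move=> t _ x y l _ _ _; rewrite ff_lin.
  split.
    by move=> t _ x _; exact: ff_diff.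
  exists (3 * s) => t _ x _ i; rewrite grad_ff mxE normrM.
  have /andP[k1 k2] := kk_ge1 R t.
  rewrite (ger0_norm (_ : 0 <= kk R t)); last lra.
  case: (ord2 i) => -> /=; rewrite normrN ger0_norm; try nra.
split.
  split => //; try lra.
    by rewrite expr0n /= sqrtr_gt0; lra.
move=> x m v [hx1 hm0 hv0 hstep].
pose vc : 'rV[R]_2 := \row_(i < 2) (if i == 0 then (3/4*s)^+2 else (4/3*s)^+2).
have vupd : forall t y, (t != 1)%N ->
    (3/4 : R) *: vc + (1 - 3/4) *: map_mx (fun a => a ^+ 2) (grad (ff s t) y) = vc.
  move=> t y /negbTE t1; apply/rowP => i; rewrite grad_ff !mxE /kk t1.
  by case: (ord2 i) => -> /=; ring.
have claim : forall t, (1 <= t)%N -> x t = 0 /\ v t = vc.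
  elim => [//|t IH] _.
  case: t IH => [|t] IH.
    split => //.
    have [_ -> _] := hstep 1%N isT.
    rewrite hv0 scaler0 add0r; apply/rowP => i; rewrite grad_ff !mxE /kk /=.
    by case: (ord2 i) => -> /=; field.
  have [xt vt] := IH isT.
  have [mt vt1 hp] := hstep t.+1 isT.
  have xt1 : x t.+2 = 0.
    move: hp; rewrite vt mt xt /= scale0r !add0r subr0 scale1r.
    pose b := 1 / Num.sqrt (t.+1)%:R * kk R t.+1.
    have hb : 0 <= b.
      have /andP[k1 _] := kk_ge1 R t.+1.
      by apply: mulr_ge0; [apply: divr_ge0 => //; exact: sqrtr_ge0 | lra].
    have ht : 0 < Num.sqrt ((t.+1)%:R : R) by rewrite sqrtr_gt0 ltr0n.
    have -> : map_mx Num.sqrt vc = \row_(i < 2) (if i == 0 then 3/4*s else 4/3*s).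
      apply/rowP => i; rewrite !mxE; case: (ord2 i) => -> /=;
        by rewrite sqrtr_sqr ger0_norm //; lra.
    have -> : - \row_i (1 / Num.sqrt (t.+1)%:R * grad (ff s t.+1) 0 0 i
                / Num.sqrt (vc 0 i + eps))
        = \row_(i < 2) (if i == 0 then b*(3/5) else b*(4/5)).
      apply/rowP => i; rewrite grad_ff !mxE es /=.
      case: (ord2 i) => -> /=.
        rewrite (_ : (3 / 4 * s) ^+ 2 + s ^+ 2 = (5/4 * s) ^+ 2); last by field.
        rewrite sqrtr_sqr ger0_norm; last lra.
        by rewrite /b; field; rewrite (gt_eqF ht) (gt_eqF hs).
      rewrite (_ : (4 / 3 * s) ^+ 2 + s ^+ 2 = (5/3 * s) ^+ 2); last by field.
      rewrite sqrtr_sqr ger0_norm; last lra.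
      by rewrite /b; field; rewrite (gt_eqF ht) (gt_eqF hs).
    exact: proj0.
  split => //.
  have [_ -> _] := hstep t.+2 isT.
  by rewrite vt vupd.
have reg : forall T, (1 <= T)%N -> 3/16 * s * T%:R <= regret (ff s) (@Fs R) x T.
  move=> T hT; rewrite /regret.
  have -> : \sum_(1 <= t < T.+1) ff s t (x t) = 0.
    rewrite big_nat_cond big1 // => t /andP[/andP[h1 _] _].
    by have [-> _] := claim t h1; exact: ff0.
  pose ys : 'rV[R]_2 := \row_(i < 2) (if i == 0 then 1 else -(27/64)).
  have Fy : Fs ys by rewrite /Fs /= !mxE /= normrN !ger0_norm; lra.
  have lb : forall t y, Fs y -> - (5 * s) <= ff s t y.
    move=> t y [_ [y0 y1]]; rewrite /ff.
    move: y0 y1; rewrite !ler_norml => /andP[y0 y0'] /andP[y1 y1'].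
    have /andP[k1 k2] := kk_ge1 R t.
    set u := - (3 / 4 * s) * y 0 0 + - (4 / 3 * s) * y 0 1.
    have u1 : - (25/12 * s) <= u by rewrite /u; nra.
    nra.
  have hlb : has_lbound [set \sum_(1 <= t < T.+1) ff s t y | y in @Fs R].
    exists (\sum_(1 <= t < T.+1) (- (5 * s))) => z [y Fy' <-].
    by apply: ler_sum => t _; exact: lb.
  have le1 := ge_inf hlb (ex_intro2 _ _ ys Fy erefl).
  have le2 : \sum_(1 <= t < T.+1) ff s t ys <= \sum_(1 <= t < T.+1) (- (3/16 * s)).
    apply: ler_sum => t _; rewrite /ff !mxE /=.
    have /andP[k1 k2] := kk_ge1 R t.
    nra.
  move: le2; rewrite sumr_const_nat subSS subn0 -mulr_natr => le2.
  move: le1 => /= le1; lra.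
move=> /cvgrPdist_lt /(_ (3/16 * s)) H.
have [N _ HN] := H (ltac:(lra)).
have := HN N.+1 (leqnSn N); rewrite sub0r normrN.
apply/negP; rewrite -leNgt.
apply: le_trans (ler_norm _).
rewrite ler_pdivlMr ?ltr0n //.
exact: reg.
Qed.
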